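(* Let $\kappa\ge 1$ and $\tau\ge 0$ be integers such that $\chi(J)\le\tau$ for every digraph $J$ with $\omega(J)<\kappa$ having no disoriented long hole. Let $G$ be a digraph with $\omega(G)\le\kappa$ having no disoriented long hole. Then for every vertex $z$ of $G$ and every integer $r\ge1$, $\chi(N^r(z))\le 3\tau\,\chi(N^{r-1}(z))$. Consequently $\chi(N^r(z))\le\tau(3\tau)^{r-1}$ for all $r\ge 1$, and $\chi(N^s(z))\le(3\tau)^{s-r}\chi(N^r(z))$ for all $s\ge r\ge 1$.
   Context: Digraphs are finite, with no loops, parallel edges or antiparallel pairs; $G^*$ denotes the underlying undirected graph and $\chi,\omega$ refer to $G^*$; for $X\subseteq V(G)$, $\chi(X)=\chi(G[X])$. $N^r(z)$ is the set of vertices at distance exactly $r$ from $z$ in $G^*$. A hole of a digraph $G$ is an induced subdigraph $C$ such that $C^*$ is an induced cycle of $G^*$ of length at least four; it is long if its length is at least five. A hole $C$ is directed if every vertex has outdegree exactly one in $C$; alternating if every vertex has outdegree two or zero in $C$; and disoriented if it is neither directed nor alternating. *)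

(* Defs.v *)
From mathcomp Require Import all_boot.
Set Implicit Arguments. Unset Strict Implicit. Unset Printing Implicit Defensive.

Section Digraphs.
Variable T : finType.
(* [a u v] means there is an arc u -> v. *)
Variable a : rel T.

(* A digraph: no loops, no antiparallel pairs (parallel arcs are excluded
   automatically since arcs form a relation). *)
Definition digraph : Prop :=
  (forall u, ~~ a u u) /\ (forall u v, a u v -> ~~ a v u).

Definition uadj (u v : T) : bool := a u v || a v u.

Definition cliqueb (K : {set T}) : bool :=
  [forall x in K, forall y in K, (x != y) ==> uadj x y].

Definition omega : nat := \max_(K : {set T} | cliqueb K) #|K|.

Definition colorableb (X : {set T}) (k : nat) : bool :=
  [exists f : {ffun T -> 'I_#|T|.+1},
     [forall x in X, f x < k] &&
     [forall x in X, forall y in X, uadj x y ==> (f x != f y)]].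

(* chromatic number chi(X) = chi(G^*[X]) : least k such that G^*[X] is
   k-colourable (for a loopless relation #|T| colours always suffice, so the
   default #|T| is never reached spuriously). *)
Definition chi (X : {set T}) : nat :=
  \big[minn/#|T|]_(k < #|T|.+1 | colorableb X k) k.

Definition hole (n : nat) (f : 'I_n -> T) : Prop :=
  [/\ 4 <= n, injective f &
      forall i j : 'I_n,
        uadj (f i) (f j) = (j == i.+1 %% n :> nat) || (i == j.+1 %% n :> nat)].

Definition hole_outdeg (n : nat) (f : 'I_n -> T) (i : 'I_n) : nat :=
  #|[set j : 'I_n | a (f i) (f j)]|.

Definition directed_hole (n : nat) (f : 'I_n -> T) : Prop :=
  forall i, hole_outdeg f i = 1.

Definition alternating_hole (n : nat) (f : 'I_n -> T) : Prop :=
  forall i, hole_outdeg f i = 2 \/ hole_outdeg f i = 0.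

Definition disoriented_hole (n : nat) (f : 'I_n -> T) : Prop :=
  ~ directed_hole f /\ ~ alternating_hole f.

Definition no_disoriented_long_hole : Prop :=
  forall (n : nat) (f : 'I_n -> T),
    hole f -> 5 <= n -> ~ disoriented_hole f.

Fixpoint within (z : T) (k : nat) : {set T} :=
  match k with
  | 0 => [set z]
  | k'.+1 => within z k' :|: [set v | [exists u in within z k', uadj u v]]
  end.

Definition Nr (z : T) (r : nat) : {set T} :=
  match r with
  | 0 => [set z]
  | r'.+1 => within z r'.+1 :\: within z r'
  end.

End Digraphs.

(* Main.v *)
Require Import Defs.
From mathcomp Require Import all_boot zify.
From Stdlib Require Import Classical.
Set Implicit Arguments. Unset Strict Implicit. Unset Printing Implicit Defensive.

Lemma bigmin_le n (P : pred 'I_n) d (i0 : 'I_n) :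
  P i0 -> \big[minn/d]_(i < n | P i) (i : nat) <= i0.
Proof.
move=> h; have : i0 \in index_enum 'I_n by rewrite mem_index_enum.
elim: (index_enum 'I_n) => // j r IH; rewrite in_cons big_cons.
case/predU1P=> [<-|hr]; first by rewrite h geq_minl.
case: (P j); last exact: IH.
by rewrite geq_min IH ?orbT.
Qed.

Section Basic.
Variable T : finType.
Variable a : rel T.
Hypothesis dg : digraph a.

Lemma uadjC u v : uadj a u v = uadj a v u.
Proof. by rewrite /uadj orbC. Qed.

Lemma uadj_irr u : uadj a u u = false.
Proof. by rewrite /uadj orbb; apply/negbTE; case: dg. Qed.

Lemma uadj_neq u v : uadj a u v -> u != v.
Proof. by move=> h; apply/eqP=> e; rewrite e uadj_irr in h. Qed.

Lemma chi_le_T (X : {set T}) : chi a X <= #|T|.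
Proof.
rewrite /chi; apply: (big_ind (fun v => v <= #|T|)) => //.
  by move=> x y hx hy; rewrite geq_min hx.
by move=> i _; rewrite -ltnS.
Qed.

Lemma chi_colorable (X : {set T}) : colorableb a X (chi a X).
Proof.
rewrite /chi; apply: (big_ind (fun v => colorableb a X v)) => //.
- have hr : forall x : T, (enum_rank x : nat) < #|T|.+1 by move=> x; rewrite ltnS ltnW //.
  apply/existsP; exists [ffun x => inord (enum_rank x)].
  apply/andP; split.
    apply/forallP=> x; apply/implyP=> _; rewrite ffunE inordK //.
  apply/forallP=> x; apply/implyP=> _; apply/forallP=> y; apply/implyP=> _.
  apply/implyP=> h; rewrite !ffunE; apply/eqP => /(congr1 (@nat_of_ord _)).
  rewrite !inordK // => /val_inj /enum_rank_inj exy; by rewrite exy uadj_irr in h.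
- by move=> x y hx hy; case: (leqP x y).
Qed.

Lemma chi_col (X : {set T}) : exists g : T -> nat,
  (forall x, x \in X -> g x < chi a X) /\
  (forall x y, x \in X -> y \in X -> uadj a x y -> g x != g y).
Proof.
have /existsP [f /andP [/forallP h1 /forallP h2]] := chi_colorable X.
exists (fun x => val (f x)); split.
  by move=> x hx; have := h1 x; rewrite hx.
move=> x y hx hy hxy; have := h2 x; rewrite hx /= => /forallP /(_ y).
by rewrite hy hxy.
Qed.

Lemma chi_le (X : {set T}) k (g : T -> nat) :
  (forall x, x \in X -> g x < k) ->
  (forall x y, x \in X -> y \in X -> uadj a x y -> g x != g y) ->
  chi a X <= k.
Proof.
move=> hk hp.
case: (leqP k #|T|) => hkT; last by apply: leq_trans (chi_le_T X) (ltnW hkT).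
have hk' : k < #|T|.+1 by [].
have col : colorableb a X (Ordinal hk').
  apply/existsP; exists [ffun x => inord (g x)]; apply/andP; split.
    apply/forallP=> x; apply/implyP=> hx; rewrite ffunE /= inordK ?hk //.
    by apply: leq_trans (hk x hx) (leqW hkT).
  apply/forallP=> x; apply/implyP=> hx; apply/forallP=> y; apply/implyP=> hy.
  apply/implyP=> h; rewrite !ffunE; apply/eqP => /(congr1 (@nat_of_ord _)).
  rewrite !inordK; first by apply/eqP; exact: hp.
    by apply: leq_trans (hk y hy) (leqW hkT).
  by apply: leq_trans (hk x hx) (leqW hkT).
exact: (@bigmin_le #|T|.+1 (fun k : 'I_#|T|.+1 => colorableb a X k) #|T| (Ordinal hk') col).
Qed.

Lemma chi_ge1 (X : {set T}) x : x \in X -> 1 <= chi a X.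
Proof.
move=> hx; have [g [h1 _]] := chi_col X; have := h1 x hx; case: (chi a X) => //.
Qed.

Lemma clique_le (K : {set T}) : cliqueb a K -> #|K| <= omega a.
Proof. by move=> h; rewrite /omega (bigD1 K) //= leq_maxl. Qed.

Lemma cliqueP (K : {set T}) : reflect (forall x y, x \in K -> y \in K -> x != y -> uadj a x y) (cliqueb a K).
Proof.
apply: (iffP forallP).
  move=> h x y hx hy hxy; have := h x; rewrite hx /= => /forallP /(_ y).
  by rewrite hy hxy.
move=> h x; apply/implyP=> hx; apply/forallP=> y; apply/implyP=> hy; apply/implyP.
exact: h.
Qed.

Lemma clique_add (K : {set T}) u : cliqueb a K -> (forall x, x \in K -> uadj a u x) -> cliqueb a (u |: K).
Proof.
move=> /cliqueP hK hu; apply/cliqueP=> x y; rewrite !in_setU1.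
case/predU1P=> [->|hx]; case/predU1P=> [->|hy] //.
- by rewrite eqxx.
- by move=> _; apply: hu.
- by move=> _; rewrite uadjC; apply: hu.
- by apply: hK.
Qed.

End Basic.

Lemma sub_chi (kappa tau : nat)
  (Hyp : forall (J : finType) (b : rel J),
      digraph b -> omega b < kappa -> no_disoriented_long_hole b ->
      chi b [set: J] <= tau)
  (T : finType) (a : rel T) (dg : digraph a) (ndh : no_disoriented_long_hole a)
  (X : {set T}) :
  (forall K : {set T}, K \subset X -> cliqueb a K -> #|K| < kappa) ->
  chi a X <= tau.
Proof.
move=> hK.
pose J := {x : T | x \in X}.
pose b : rel J := fun s t => a (val s) (val t).
have dgb : digraph b.
  case: dg => h1 h2; split; first by move=> u; exact: h1.
  by move=> u v; exact: h2.
have omb : omega b < kappa.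
  rewrite /omega; apply: (big_ind (fun v => v < kappa)).
  - by have := hK set0 (sub0set _); rewrite cards0; apply; apply/cliqueP => x y; rewrite in_set0.
  - by move=> x y hx hy; rewrite gtn_max hx hy.
  move=> Kb hKb; rewrite -(card_imset _ val_inj); apply: hK.
    by apply/subsetP => x /imsetP [y _ ->]; exact: (valP y).
  apply/cliqueP => x y /imsetP [x' hx' ->] /imsetP [y' hy' ->] hne.
  have hne' : x' != y' by apply: contra hne => /eqP ->.
  exact: ((cliqueP b Kb) hKb x' y' hx' hy' hne').
have ndb : no_disoriented_long_hole b.
  move=> n f [h4 hinj hadj] hn hdis.
  apply: (@ndh n (fun i => val (f i))) hn hdis.
  split => //; first by move=> i j /val_inj /hinj.
have hchi := Hyp J b dgb omb ndb.
have [g [g1 g2]] := chi_col dgb [set: J].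
pose G x := if insub x is Some y then g y else 0.
have hG : forall x (hx : x \in X), G x = g (Sub x hx) by move=> x hx; rewrite /G insubT.
apply: (chi_le (g := G)).
  move=> x hx; rewrite (hG x hx); apply: leq_trans hchi.
  exact: g1 (in_setT _).
move=> x y hx hy hxy; rewrite (hG x hx) (hG y hy).
by apply: g2; rewrite ?in_setT.
Qed.

Section Path.
Variable T : finType.
Variable a : rel T.
Hypothesis dg : digraph a.
Variable D : {set T}.
Let e := [rel s t | (s \in D) && (t \in D) && uadj a s t].
Variables w u : T.

Definition walk n (q : seq T) :=
  [/\ size q = n, 0 < n, nth w q 0 = w, nth w q n.-1 = u &
      forall i, i.+1 < n -> e (nth w q i) (nth w q i.+1)].

Lemma walk_short n q s t : walk n q -> s <= t -> t < n ->
  (s = 0 /\ nth w q t = w) \/ (0 < s /\ e (nth w q s.-1) (nth w q t)) ->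
  walk (n - (t - s)) (take s q ++ drop t q).
Proof.
move=> [hs hn h0 hl he] hst htn hc.
have hq k : nth w (take s q ++ drop t q) k =
    if k < s then nth w q k else nth w q (t + (k - s)).
  rewrite nth_cat size_take hs.
  have -> : (if s < n then s else n) = s by case: ifP => //; lia.
  case: ifP => hk; first by rewrite nth_take.
  by rewrite nth_drop.
split.
- rewrite size_cat size_take size_drop hs.
  have -> : (if s < n then s else n) = s by case: ifP => //; lia.
  lia.
- lia.
- rewrite hq; case: ifP => // hs0.
  have -> : s = 0 by lia.
  by case: hc => [[_ hw] | [hs1 _]]; [rewrite addn0 | lia].
- rewrite hq ifF; last lia.
  have -> : t + ((n - (t - s)).-1 - s) = n.-1 by lia.
  exact: hl.
- move=> i hi; rewrite !hq.
  case: (ltnP i.+1 s) => h1.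
    by rewrite ifT; [apply: he; lia | lia].
  case: (ltnP i s) => h2.
    have his : i = s.-1 by lia.
    have -> : t + (i.+1 - s) = t by lia.
    case: hc => [[hs0 _]|[_ hc]]; first lia.
    by rewrite his.
  have -> : t + (i.+1 - s) = (t + (i - s)).+1 by lia.
  apply: he; lia.
Qed.

Lemma induced_path : w \in D -> u \in D -> w != u -> ~~ uadj a w u -> connect e w u ->
  exists q : seq T,
    [/\ 3 <= size q, nth w q 0 = w, nth w q (size q).-1 = u &
       forall i, i < size q -> nth w q i \in D] /\
    (forall i j, i < size q -> j < size q ->
       uadj a (nth w q i) (nth w q j) = (j == i.+1) || (i == j.+1)) /\
    (forall i j, i < size q -> j < size q -> nth w q i = nth w q j -> i = j).
Proof.
move=> hw hu hne hnadj /connectP [p hp hlast].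
have exN : exists n, exists q, walk n q.
  exists (size p).+1, (w :: p); split => //.
  - by have := nth_last w (w :: p); rewrite /= => ->.
  - by move=> i hi; move/(pathP w): hp => /(_ i hi).
have [n [q [hq hmin']]] : exists n q, walk n q /\ forall m, (exists q, walk m q) -> n <= m.
  case: exN => n0; elim/ltn_ind: n0 => n IH hn.
  case: (classic (exists m, m < n /\ exists q, walk m q)) => [[m [hm hmq]] | hno].
    exact: IH hm hmq.
  case: hn => q hq; exists n, q; split => // m hm; rewrite leqNgt; apply/negP => hlt.
  by apply: hno; exists m.
have hmin : forall m, (exists q, walk m q) -> n <= m by exact: hmin'.
have hq0 := hq; case: hq0 => [hs hn h0 hl he].
have nomin : forall s t, s <= t -> t < n -> s < t ->
    (s = 0 /\ nth w q t = w) \/ (0 < s /\ e (nth w q s.-1) (nth w q t)) -> False.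
  move=> s t h1 h2 h3 hc.
  have := hmin _ (ex_intro _ _ (walk_short hq h1 h2 hc)); lia.
have hU : forall i j, i < j -> j < n -> nth w q i <> nth w q j.
  move=> i j hij hjn heq; apply: (nomin i j) => //; first lia.
  case: (posnP i) => hi; [left; split => //; rewrite -heq hi // | right; split => //].
  rewrite -heq; have := he i.-1; rewrite prednK //; apply; lia.
have hn2 : 2 <= n.
  case: (ltnP 1 n) => // h; have e1 : n = 1 by lia.
  by move: hl; rewrite e1 /= h0 => hwu; rewrite hwu eqxx in hne.
have hD : forall i, i < n -> nth w q i \in D.
  move=> i hi; case: (ltnP i.+1 n) => h.
    by have := he i h; rewrite /= => /andP [/andP [] ]. 
  have := he i.-1; rewrite prednK; last lia.
  by move=> /(_ hi) /= /andP [/andP []].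
have hC : forall i j, i.+1 < j -> j < n -> ~~ uadj a (nth w q i) (nth w q j).
  move=> i j hij hj; apply/negP => hadj; apply: (nomin i.+1 j) => //; try lia.
  right; split => //=; rewrite hadj !hD //; lia.
have hI : forall i j, i < n -> j < n ->
    uadj a (nth w q i) (nth w q j) = (j == i.+1) || (i == j.+1).
  move=> i j hi hj.
  case: (ltngtP i j) => hij.
  - case: (eqVneq j i.+1) => hj1.
      by rewrite hj1 /=; have := he i; rewrite hj1 in hj => /(_ hj) /andP [_ ->].
    rewrite /=; have -> : (i == j.+1) = false by apply/eqP; lia.
    apply/negbTE; apply: hC => //; lia.
  - case: (eqVneq i j.+1) => hi1.
      rewrite hi1 orbT uadjC; have := he j; rewrite hi1 in hi => /(_ hi) /andP [_ ->] //.
    rewrite orbF; have -> : (j == i.+1) = false by apply/eqP; lia.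
    rewrite uadjC; apply/negbTE; apply: hC => //; lia.
  - rewrite hij uadj_irr //; have -> : (j == j.+1) = false by apply/eqP; lia.
    by [].
exists q; split; [split|split].
- rewrite hs; case: (ltnP 2 n) => // h; have hn2' : n = 2 by lia.
  have := he 0; rewrite hn2' => /(_ (ltnSn _)) /andP [_ h'].
  by rewrite h0 -[nth w q 1]/(nth w q (2).-1) -hn2' hl (negbTE hnadj) in h'.
- exact: h0.
- by rewrite hs.
- by rewrite hs.
- by rewrite hs.
- rewrite hs => i j hi hj heq.
  case: (ltngtP i j) => hij //.
    by exfalso; apply: (hU i j).
  by exfalso; apply: (hU j i) => //; rewrite heq.
Qed.

End Path.

Section Levels.
Variable T : finType.
Variable a : rel T.
Hypothesis dg : digraph a.
Variable z : T.

Lemma w_adj k v t : v \in within a z k -> uadj a v t -> t \in within a z k.+1.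
Proof.
move=> hv ht; rewrite /= in_setU; apply/orP; right; rewrite inE.
by apply/existsP; exists v; rewrite hv.
Qed.

Lemma w_step k v : v \in within a z k.+1 -> v \notin within a z k ->
  exists2 t, t \in within a z k & uadj a t v.
Proof.
rewrite /= in_setU => /orP [->//|]; rewrite inE => /existsP [t /andP [ht htv]] _.
by exists t.
Qed.

Lemma w_mono k l : k <= l -> within a z k \subset within a z l.
Proof.
elim: l => [|l IH]; first by rewrite leqn0 => /eqP ->.
rewrite leq_eqVlt => /orP [/eqP ->//|hk].
by apply: subset_trans (IH hk) _; rewrite /= subsetUl.
Qed.

Lemma w_monoP k l v : k <= l -> v \in within a z k -> v \in within a z l.
Proof. by move=> h; apply/subsetP/w_mono. Qed.

Lemma Nr_S k x : x \in Nr a z k.+1 = (x \in within a z k.+1) && (x \notin within a z k).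
Proof. by rewrite /Nr inE andbC. Qed.

Lemma w_far m x t : x \in Nr a z m.+2 -> t \in within a z m -> ~~ uadj a t x.
Proof.
rewrite Nr_S => /andP [_ hx] ht; apply/negP => h.
by have := w_adj ht h; rewrite (negbTE hx).
Qed.

Lemma w_connect (D : {set T}) m v : within a z m \subset D -> v \in within a z m ->
  connect [rel s t | (s \in D) && (t \in D) && uadj a s t] z v.
Proof.
move=> hD; elim: m hD v => [|m IH] hD v.
  by rewrite /= inE => /eqP ->; exact: connect0.
have hD' : within a z m \subset D by apply: subset_trans hD; exact: w_mono.
case: (boolP (v \in within a z m)) => hvm; first by move=> _; exact: IH.
move=> hv; have [t ht htv] := w_step hv hvm.
apply: connect_trans (IH hD' t ht) (connect1 _).
rewrite /= htv andbT (subsetP hD) ?(subsetP hD v hv) //.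
exact: (w_monoP (leqnSn m)).
Qed.

End Levels.

Lemma card2_sub (T : finType) (S : {set T}) p q : S \subset [set p; q] -> p != q ->
  #|S| = (p \in S) + (q \in S).
Proof.
move=> /subsetP hS hpq.
case hp: (p \in S); case hq: (q \in S).
- have -> : S = [set p; q].
    apply/setP => j; apply/idP/idP; first exact: hS.
    by rewrite !inE => /orP [/eqP ->|/eqP ->].
  by rewrite cards2 hpq.
- have -> : S = [set p].
    apply/setP => j; rewrite inE; apply/idP/idP; last by move/eqP ->.
    move=> hj; have := hS j hj; rewrite !inE => /orP [//|/eqP e].
    by rewrite e hq in hj.
  by rewrite cards1.
- have -> : S = [set q].
    apply/setP => j; rewrite inE; apply/idP/idP; last by move/eqP ->.
    move=> hj; have := hS j hj; rewrite !inE => /orP [/eqP e|//].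
    by rewrite e hp in hj.
  by rewrite cards1.
- have -> : S = set0.
    apply/setP => j; rewrite inE; apply/negbTE/negP => hj.
    by have := hS j hj; rewrite !inE => /orP [/eqP e|/eqP e]; rewrite e ?hp ?hq in hj.
  by rewrite cards0.
Qed.

Lemma arc_sum (T : finType) (a : rel T) : digraph a -> forall u v,
  uadj a u v -> a u v + a v u = 1.
Proof.
move=> [_ h] u v; rewrite /uadj; case huv: (a u v) => /=.
  by have := h u v huv; case: (a v u).
by move=> ->.
Qed.

Lemma modS_lt i n : i.+1 < n -> i.+1 %% n = i.+1.
Proof. by move=> h; rewrite modn_small. Qed.

Lemma modS_last i n : i.+1 = n -> i.+1 %% n = 0.
Proof. by move=> ->; rewrite modnn. Qed.

Lemma cyc_adj (T : finType) (ad : T -> T -> bool) x y w (q : seq T) :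
  3 <= size q ->
  ad x x = false -> ad y y = false -> ad x y = true -> ad y x = true ->
  (forall k, k < size q -> ad x (nth w q k) = (k == (size q).-1)) ->
  (forall k, k < size q -> ad y (nth w q k) = (k == 0)) ->
  (forall k, k < size q -> ad (nth w q k) x = (k == (size q).-1)) ->
  (forall k, k < size q -> ad (nth w q k) y = (k == 0)) ->
  (forall i j, i < size q -> j < size q -> ad (nth w q i) (nth w q j) = (j == i.+1) || (i == j.+1)) ->
  forall i j, i < (size q).+2 -> j < (size q).+2 ->
    ad (nth x (x :: y :: q) i) (nth x (x :: y :: q) j) =
      (j == i.+1 %% (size q).+2) || (i == j.+1 %% (size q).+2).
Proof.
move=> h3 hxx hyy hxy hyx hxq hyq hqx hqy hqI.
have hcq : forall k, k < size q -> nth x q k = nth w q k.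
  by move=> k hk; apply: set_nth_default.
move: (size q) h3 hxq hyq hqx hqy hqI hcq => n h3 hxq hyq hqx hqy hqI hcq i j hi hj.
have hmi : i.+1 %% n.+2 = if i.+1 == n.+2 then 0 else i.+1.
  by case: eqP => h; [rewrite modS_last | rewrite modS_lt //; lia].
have hmj : j.+1 %% n.+2 = if j.+1 == n.+2 then 0 else j.+1.
  by case: eqP => h; [rewrite modS_last | rewrite modS_lt //; lia].
rewrite hmi hmj; clear hmi hmj.
case: (eqVneq i.+1 n.+2) => ei; case: (eqVneq j.+1 n.+2) => ej.
all: case: i hi ei => [|[|i]] hi ei; case: j hj ej => [|[|j]] hj ej => /=.
all: rewrite ?hxx ?hyy ?hxy ?hyx.
all: rewrite ?hcq ?hxq ?hyq ?hqx ?hqy ?hqI; try lia.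
Qed.

Lemma cyc_inj (T : finType) x y w (q : seq T) :
  x != y -> (forall k, k < size q -> nth w q k != x) -> (forall k, k < size q -> nth w q k != y) ->
  (forall i j, i < size q -> j < size q -> nth w q i = nth w q j -> i = j) ->
  forall i j, i < (size q).+2 -> j < (size q).+2 ->
    nth x (x :: y :: q) i = nth x (x :: y :: q) j -> i = j.
Proof.
move=> hxy hqx hqy hqU.
have hcq : forall k, k < size q -> nth x q k = nth w q k.
  by move=> k hk; apply: set_nth_default.
case=> [|[|i]] [|[|j]] //= hi hj.
- by move/eqP; rewrite (negbTE hxy).
- by rewrite hcq // => e; move: (hqx j hj); rewrite e eqxx.
- by move/esym/eqP; rewrite (negbTE hxy).
- by rewrite hcq // => e; move: (hqy j hj); rewrite e eqxx.
- by rewrite hcq // => e; move: (hqx i hi); rewrite e eqxx.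
- by rewrite hcq // => e; move: (hqy i hi); rewrite e eqxx.
- by rewrite !hcq // => /hqU -> //.
Qed.

Lemma outdeg2 (T : finType) (a : rel T) n (f : 'I_n -> T) (i p r : 'I_n) :
  p != r -> (forall j, a (f i) (f j) -> j = p \/ j = r) ->
  hole_outdeg a f i = a (f i) (f p) + a (f i) (f r).
Proof.
move=> hpr hj; rewrite /hole_outdeg (card2_sub _ hpr); first by rewrite !inE.
apply/subsetP => j; rewrite !inE => /hj [->|->]; by rewrite eqxx ?orbT.
Qed.

Lemma mod0_last j n : j < n -> (0 == j.+1 %% n) = (j == n.-1).
Proof.
move=> hj; case: (eqVneq j.+1 n) => e.
  by rewrite modS_last //; lia.
rewrite modS_lt; lia.
Qed.

Ltac slia := repeat match goal with H : ?P |- _ =>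
  lazymatch P with
  | is_true (_ <= _) => fail
  | is_true (_ != _) => fail
  | is_true (_ == _) => fail
  | @eq nat _ _ => fail
  | nat => fail
  | _ => clear H
  end end; lia.

Section Key.
Variable T : finType.
Variable a : rel T.
Hypothesis dg : digraph a.
Hypothesis ndh : no_disoriented_long_hole a.
Variable z : T.

Lemma key m x y u w :
  x \in Nr a z m.+2 -> y \in Nr a z m.+2 -> u \in Nr a z m.+1 -> w \in Nr a z m.+1 ->
  u != w -> ~~ uadj a u w -> uadj a u x -> uadj a w y -> ~~ uadj a u y -> ~~ uadj a w x ->
  uadj a x y -> a u x = a w y -> False.
Proof.
move=> hx hy hu hw huw hnuw hux hwy hnuy hnwx hxy hor.
pose D := within a z m :|: [set u; w].
have hmD : within a z m \subset D := subsetUl _ _.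
have huD : u \in D by rewrite !inE eqxx orbT.
have hwD : w \in D by rewrite !inE eqxx !orbT.
have hsym : symmetric [rel s t | (s \in D) && (t \in D) && uadj a s t].
  by move=> s t /=; rewrite uadjC [(s \in D) && _]andbC.
have hconn : connect [rel s t | (s \in D) && (t \in D) && uadj a s t] w u.
  move: (hu) (hw); rewrite !Nr_S => /andP [hu1 hu2] /andP [hw1 hw2].
  have [t1 ht1 ht1u] := w_step hu1 hu2.
  have [t2 ht2 ht2w] := w_step hw1 hw2.
  have c1 : connect [rel s t | (s \in D) && (t \in D) && uadj a s t] w t2.
    by apply: connect1; rewrite /= hwD (subsetP hmD) // uadjC.
  have c2 : connect [rel s t | (s \in D) && (t \in D) && uadj a s t] t2 z.
    by rewrite (sym_connect_sym hsym); exact: (w_connect hmD ht2).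
  have c3 : connect [rel s t | (s \in D) && (t \in D) && uadj a s t] z t1.
    exact: (w_connect hmD ht1).
  have c4 : connect [rel s t | (s \in D) && (t \in D) && uadj a s t] t1 u.
    by apply: connect1; rewrite /= huD (subsetP hmD).
  exact: connect_trans (connect_trans c1 c2) (connect_trans c3 c4).
have hwu : w != u by rewrite eq_sym.
have hnwu : ~~ uadj a w u by rewrite uadjC.
have [q [[hq3 hq0 hql hqD] [hqI hqU]]] := induced_path dg hwD huD hwu hnwu hconn.
set mq := size q in hq3 hql hqD hqI hqU.
have hDw : forall v, v \in D -> v \in within a z m.+1.
  move=> v /setUP [hv|/set2P [->|->]].
  - exact: (w_monoP (leqnSn m)).
  - by move: hu; rewrite Nr_S => /andP [].
  - by move: hw; rewrite Nr_S => /andP [].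
have hxD : x \notin D by apply/negP => /hDw; move: hx; rewrite Nr_S => /andP [_ /negP].
have hyD : y \notin D by apply/negP => /hDw; move: hy; rewrite Nr_S => /andP [_ /negP].
have hqin : forall k, 0 < k -> k < mq.-1 -> nth w q k \in within a z m.
  move=> k h1 h2; have hk : k < mq by slia.
  have /setUP := hqD k hk.
  case=> [-> //|/set2P [e1|e2]].
  - have hk2 : mq.-1 < mq by slia.
    rewrite -hql in e1; have := hqU _ _ hk hk2 e1; slia.
  - have hk2 : 0 < mq by slia.
    have e2' : nth w q k = nth w q 0 by rewrite hq0.
    have := hqU _ _ hk hk2 e2'; slia.
have hxq : forall k, k < mq -> uadj a x (nth w q k) = (k == mq.-1).
  move=> k hk; case: (eqVneq k mq.-1) => [->|hk1]; first by rewrite hql uadjC hux.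
  case: (posnP k) => [->|hk0]; first by rewrite hq0 uadjC (negbTE hnwx); apply/esym/eqP; slia.
  rewrite uadjC; apply/negbTE; apply: (w_far hx); apply: hqin => //; slia.
have hyq : forall k, k < mq -> uadj a y (nth w q k) = (k == 0).
  move=> k hk; case: (posnP k) => [->|hk0]; first by rewrite hq0 uadjC hwy.
  case: (eqVneq k mq.-1) => [->|hk1].
    by rewrite hql uadjC (negbTE hnuy); apply/esym/eqP; slia.
  rewrite uadjC; apply/negbTE; apply: (w_far hy); apply: hqin => //; slia.
have hqx : forall k, k < mq -> uadj a (nth w q k) x = (k == mq.-1).
  by move=> k hk; rewrite uadjC hxq.
have hqy : forall k, k < mq -> uadj a (nth w q k) y = (k == 0).
  by move=> k hk; rewrite uadjC hyq.
have hyx : uadj a y x by rewrite uadjC.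
pose c := x :: y :: q.
pose n := mq.+2.
have hcq : forall k, k < mq -> nth x q k = nth w q k.
  by move=> k hk; apply: set_nth_default.
have hadjc : forall i j, i < n -> j < n ->
    uadj a (nth x c i) (nth x c j) = (j == i.+1 %% n) || (i == j.+1 %% n).
  exact: (cyc_adj hq3 (uadj_irr dg x) (uadj_irr dg y) hxy hyx hxq hyq hqx hqy hqI).
have hqnx : forall k, k < mq -> nth w q k != x.
  by move=> k hk; apply/eqP => e; move: hxD; rewrite -e hqD.
have hqny : forall k, k < mq -> nth w q k != y.
  by move=> k hk; apply/eqP => e; move: hyD; rewrite -e hqD.
have hinjn := cyc_inj (uadj_neq dg hxy) hqnx hqny hqU.
pose f : 'I_n -> T := fun i => nth x c i.
have hhole : hole a f.
  split; first exact: ltnW hq3.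
    by move=> i j /= e; apply: val_inj; apply: hinjn (ltn_ord i) (ltn_ord j) e.
  by move=> i j; apply: hadjc.
have hn0 : 0 < n by [].
have hn1 : 1 < n by rewrite /n.
have hn2 : 2 < n by rewrite /n; slia.
have hnl : n.-1 < n by rewrite /n.
pose o0 : 'I_n := Ordinal hn0.
pose o1 : 'I_n := Ordinal hn1.
pose o2 : 'I_n := Ordinal hn2.
pose ol : 'I_n := Ordinal hnl.
have fo0 : f o0 = x by [].
have fo1 : f o1 = y by [].
have fo2 : f o2 = w by rewrite /f /= hcq ?hq0 //; slia.
have fol : f ol = u.
  have e : mq.+1 = (mq.-1).+2 by slia.
  rewrite /f -[nat_of_ord ol]/(mq.+1) e /= hcq ?hql //; slia.
have out0 : hole_outdeg a f o0 = a x y + a x u.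
  rewrite (outdeg2 (p := o1) (r := ol)) ?fo0 ?fo1 ?fol //.
    by apply/eqP => /(congr1 val) /=; rewrite /n; slia.
  move=> j hj; have : uadj a (f o0) (f j) by rewrite /uadj hj.
  rewrite hadjc // mod0_last // modn_small // => /orP [/eqP e|/eqP e].
    by left; apply: val_inj.
  by right; apply: val_inj.
have out1 : hole_outdeg a f o1 = a y x + a y w.
  rewrite (outdeg2 (p := o0) (r := o2)) ?fo0 ?fo1 ?fo2 //.
  move=> j hj; have : uadj a (f o1) (f j) by rewrite /uadj hj.
  rewrite hadjc //= (modn_small hn2).
  move=> /orP [/eqP e|h]; first by right; apply: val_inj.
  left; apply: val_inj => /=.
  case: (eqVneq (nat_of_ord j).+1 n) => e'; first by rewrite modS_last in h.
  rewrite modS_lt in h; last by have := ltn_ord j; slia.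
  move: h; slia.
have s1 := arc_sum dg hxy.
have s2 := arc_sum dg hux.
have s3 := arc_sum dg hwy.
apply: (ndh hhole (_ : 5 <= n)); first exact: hq3.
split.
  move=> hd; have := hd o0; have := hd o1; rewrite out0 out1.
  move: s1 s2 s3 hor; rewrite [a y x + _]addnC.
  by case: (a x y); case: (a y x); case: (a u x); case: (a x u); case: (a w y); case: (a y w).
move=> hd; have := hd o0; have := hd o1; rewrite out0 out1.
move: s1 s2 s3 hor; rewrite [a y x + _]addnC.
by case: (a x y); case: (a y x); case: (a u x); case: (a x u); case: (a w y); case: (a y w) => //= ? ? ? ? [] ? [].
Qed.

End Key.

Section Col.
Variable T : finType.
Variable a : rel T.
Hypothesis dg : digraph a.

Definition colf (X : {set T}) : T -> nat := fun v =>
  if [pick f : {ffun T -> 'I_#|T|.+1} |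
        [forall x in X, f x < chi a X] &&
        [forall x in X, forall y in X, uadj a x y ==> (f x != f y)]] is Some f
  then val (f v) else 0.

Lemma colfP (X : {set T}) :
  (forall x, x \in X -> colf X x < chi a X) /\
  (forall x y, x \in X -> y \in X -> uadj a x y -> colf X x != colf X y).
Proof.
rewrite /colf; case: pickP => [f /andP [/forallP h1 /forallP h2] | hn].
  split; first by move=> x hx; have := h1 x; rewrite hx.
  move=> x y hx hy hxy; have := h2 x; rewrite hx /= => /forallP /(_ y).
  by rewrite hy hxy.
have := chi_colorable dg X; rewrite /colorableb => /existsP [f hf].
by rewrite hn in hf.
Qed.

End Col.

Lemma mixed_neq (A B t b c : nat) : b < t -> c < t -> A != B -> A * t + b != B * t + c.
Proof.
move=> hb hc hAB; apply/eqP => e.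
have : (A * t + b) %/ t = (B * t + c) %/ t by rewrite e.
have ht : 0 < t by lia.
rewrite !divnMDl // !divn_small // !addn0 => eAB.
by rewrite eAB eqxx in hAB.
Qed.

Ltac snia := repeat match goal with H : ?P |- _ =>
  lazymatch P with
  | is_true (_ <= _) => fail
  | is_true (_ != _) => fail
  | is_true (_ == _) => fail
  | @eq nat _ _ => fail
  | nat => fail
  | _ => clear H
  end end; nia.

Section Step.
Variables kappa tau : nat.
Hypothesis Hyp : forall (J : finType) (b : rel J),
      digraph b -> omega b < kappa -> no_disoriented_long_hole b ->
      chi b [set: J] <= tau.
Variable T : finType.
Variable a : rel T.
Hypothesis dg : digraph a.
Hypothesis omg : omega a <= kappa.
Hypothesis ndh : no_disoriented_long_hole a.
Variable z : T.

Lemma step1 : chi a (Nr a z 1) <= tau.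
Proof.
apply: (sub_chi Hyp dg ndh) => K hK hcl.
have hz : z \notin K.
  apply/negP => /(subsetP hK); rewrite Nr_S => /andP [_]; by rewrite /= inE eqxx.
have hadj : forall v, v \in K -> uadj a z v.
  move=> v /(subsetP hK); rewrite Nr_S => /andP [h1 h2].
  have [t ht htv] := w_step h1 h2; move: ht; rewrite /= inE => /eqP <-; exact: htv.
have := clique_le (clique_add hcl hadj); rewrite cardsU1 hz /=.
move=> h; apply: leq_trans h omg.
Qed.

Lemma step r : 1 <= r -> chi a (Nr a z r) <= 3 * tau * chi a (Nr a z r.-1).
Proof.
case: r => [//|[|m]] _.
  apply: leq_trans step1 _; have := chi_ge1 dg (set11 z) ; rewrite /=.
  move=> h; change (tau <= 3 * tau * chi a [set z]); nia.
pose L := Nr a z m.+1.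
pose M := Nr a z m.+2.
have [g [g1 g2]] := chi_col dg L.
pose P x := [set t in L | uadj a t x].
pose p x := if [pick t in P x] is Some t0 then [arg min_(t < t0 in P x) enum_rank t] else x.
have hP : forall x, x \in M -> exists t, t \in P x.
  move=> x; rewrite /M Nr_S => /andP [h1 h2]; have [t ht htx] := w_step h1 h2.
  exists t; rewrite inE htx andbT /L Nr_S ht /=.
  apply/negP => htm; by have := w_adj htm htx; rewrite (negbTE h2).
have hp : forall x, x \in M -> p x \in P x /\ forall t, t \in P x -> enum_rank (p x) <= enum_rank t.
  move=> x hx; rewrite /p; case: pickP => [t0 ht0 | hn].
    by case: (arg_minnP (fun t => enum_rank t) ht0) => v hv hmin; split.
  by have [t ht] := hP x hx; rewrite hn in ht.
have hpL : forall x, x \in M -> p x \in L.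
  by move=> x /hp [] ; rewrite inE => /andP [].
have hpx : forall x, x \in M -> uadj a (p x) x.
  by move=> x /hp [] ; rewrite inE => /andP [].
have hLM : forall v, v \in L -> v \in M -> False.
  move=> v; rewrite /L /M !Nr_S => /andP [h1 _] /andP [_ h2].
  by rewrite h1 in h2.
pose o x := a (p x) x.
have core : forall v1 v2, v1 \in M -> v2 \in M -> g (p v1) = g (p v2) -> o v1 = o v2 ->
    uadj a v1 v2 -> p v1 != p v2 -> uadj a (p v1) v2 || uadj a (p v2) v1.
  move=> v1 v2 hv1 hv2 eg eo h12 hne.
  have hnuw : ~~ uadj a (p v1) (p v2).
    apply/negP => h; have := g2 _ _ (hpL _ hv1) (hpL _ hv2) h; by rewrite eg eqxx.
  case h1: (uadj a (p v1) v2); case h2: (uadj a (p v2) v1) => //=.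
  exfalso; apply: (key dg ndh hv1 hv2 (hpL _ hv1) (hpL _ hv2) hne hnuw (hpx _ hv1) (hpx _ hv2)).
  - by rewrite h1.
  - by rewrite h2.
  - exact: h12.
  - exact: eo.
pose cls x := [set v in M | (g (p v) == g (p x)) && (o v == o x)].
have hcls : forall x0, x0 \in M -> chi a (cls x0) <= tau.
  move=> x0 hx0; apply: (sub_chi Hyp dg ndh) => K hK hcl.
  have hk1 : 0 < kappa.
    apply: leq_trans omg; apply: (@leq_trans #|[set x0]|); first by rewrite cards1.
    by apply: clique_le; apply/cliqueP => x y; rewrite !inE => /eqP -> /eqP ->; rewrite eqxx.
  case: (set_0Vmem K) => [-> | [v0 hv0]]; first by rewrite cards0.
  have hKM : forall v, v \in K -> [/\ v \in M, g (p v) = g (p x0) & o v = o x0].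
    by move=> v /(subsetP hK); rewrite inE => /andP [-> /andP [/eqP -> /eqP ->]].
  case: (arg_maxnP (fun v => enum_rank (p v)) hv0) => xm hxm hmax.
  have [hxmM hxmg hxmo] := hKM xm hxm.
  have huK : forall v, v \in K -> uadj a (p xm) v.
    move=> v hv; have [hvM hvg hvo] := hKM v hv.
    case: (eqVneq (p v) (p xm)) => [e|ne]; first by rewrite -e; exact: hpx.
    have hvx : v != xm by apply: contra ne => /eqP ->.
    have hadj : uadj a v xm := (cliqueP a K hcl) v xm hv hxm hvx.
    have := core v xm hvM hxmM (etrans hvg (esym hxmg)) (etrans hvo (esym hxmo)) hadj ne.
    case/orP => [h|//].
    have hpv : p v \in P xm by rewrite inE h andbT hpL.
    have r1 := (hp xm hxmM).2 _ hpv.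
    have r2 := hmax v hv.
    have : enum_rank (p v) = enum_rank (p xm) by apply: val_inj; apply/eqP; rewrite eqn_leq r1 andbT; exact: r2.
    by move/enum_rank_inj => e; rewrite e eqxx in ne.
  have huK' : p xm \notin K.
    by apply/negP => /hKM [hM _ _]; apply: (hLM _ (hpL _ hxmM) hM).
  have := clique_le (clique_add hcl huK); rewrite cardsU1 huK' /= => h.
  exact: leq_trans h omg.
pose G x := ((g (p x)).*2 + o x) * tau + colf a (cls x) x.
have hxcls : forall x, x \in M -> x \in cls x by move=> x hx; rewrite inE hx !eqxx.
apply: (@leq_trans ((chi a L).*2 * tau)); last first.
  rewrite -mul2n; change ((2 * chi a L) * tau <= 3 * tau * chi a L); move: (chi a L) => cL; snia.
apply: (@chi_le _ _ M _ G).
  move=> x hx; rewrite /G.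
  have hg := g1 _ (hpL _ hx).
  have hc := leq_trans ((colfP dg (cls x)).1 x (hxcls x hx)) (hcls x hx).
  have hA : (g (p x)).*2 + o x < (chi a L).*2 by case: (o x); rewrite -!mul2n; snia.
  move: hA hc; move: (colf a (cls x) x) ((g (p x)).*2 + o x) => c A hA hc; snia.
move=> x y hx hy hxy; rewrite /G.
case: (eqVneq (g (p x)) (g (p y))) => e1; case: (eqVneq (o x) (o y)) => e2.
- have ec : cls y = cls x by apply/setP => v; rewrite !inE e1 e2.
  rewrite e1 e2 ec eqn_add2l.
  apply: (colfP dg (cls x)).2 => //; first exact: hxcls.
  by rewrite -ec; exact: hxcls.
- apply: mixed_neq.
  + exact: leq_trans ((colfP dg (cls x)).1 x (hxcls x hx)) (hcls x hx).
  + exact: leq_trans ((colfP dg (cls y)).1 y (hxcls y hy)) (hcls y hy).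
  + by rewrite e1 eqn_add2l; move: (o x) (o y) e2 => [] [].
- apply: mixed_neq.
  + exact: leq_trans ((colfP dg (cls x)).1 x (hxcls x hx)) (hcls x hx).
  + exact: leq_trans ((colfP dg (cls y)).1 y (hxcls y hy)) (hcls y hy).
  + rewrite e2; move: (o y) (g (p x)) (g (p y)) e1 => b gx gy h; rewrite -!mul2n.
    by apply/eqP => h'; move/eqP: h; apply; move: h'; case: b; snia.
- apply: mixed_neq.
  + exact: leq_trans ((colfP dg (cls x)).1 x (hxcls x hx)) (hcls x hx).
  + exact: leq_trans ((colfP dg (cls y)).1 y (hxcls y hy)) (hcls y hy).
  + move: (o x) (o y) (g (p x)) (g (p y)) e1 e2 => b1 b2 gx gy h _; rewrite -!mul2n.
    by apply/eqP => h'; move/eqP: h; apply; move: h'; case: b1; case: b2; snia.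
Qed.

End Step.

Theorem mainTheorem5 (kappa tau : nat) :
  1 <= kappa ->
  (forall (J : finType) (b : rel J),
      digraph b -> omega b < kappa -> no_disoriented_long_hole b ->
      chi b [set: J] <= tau) ->
  forall (T : finType) (a : rel T),
    digraph a -> omega a <= kappa -> no_disoriented_long_hole a ->
    forall z : T,
      (forall r : nat, 1 <= r ->
         chi a (Nr a z r) <= 3 * tau * chi a (Nr a z r.-1)) /\
      (forall r : nat, 1 <= r ->
         chi a (Nr a z r) <= tau * (3 * tau) ^ r.-1) /\
      (forall r s : nat, 1 <= r -> r <= s ->
         chi a (Nr a z s) <= (3 * tau) ^ (s - r) * chi a (Nr a z r)).
Proof.
move=> hk Hyp T a dg omg ndh z.
have st := @step kappa tau Hyp T a dg omg ndh z.
have s1 := @step1 kappa tau Hyp T a dg omg ndh z.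
split; first exact: st.
split.
  elim=> [//|r IH] _; case: r IH => [_|r IH]; first by rewrite expn0 muln1.
  apply: leq_trans (st r.+2 isT) _.
  rewrite [r.+2.-1]/= expnS; have := IH isT; rewrite [r.+1.-1]/=.
  move: (chi a (Nr a z r.+1)) ((3 * tau) ^ r) => c E h; nia.
move=> r s hr; elim: s => [|s IH] hrs; first by move: hr hrs; case: r.
case: (eqVneq r s.+1) => [->|ne]; first by rewrite subnn expn0 mul1n.
have hrs' : r <= s by move: hrs ne; clear; move=> h1 h2; lia.
apply: leq_trans (st s.+1 isT) _.
rewrite subSn // expnS [s.+1.-1]/=; have := IH hrs'.
move: (chi a (Nr a z s)) (chi a (Nr a z r)) ((3 * tau) ^ (s - r)) => c d E h; nia.
Qed.
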